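(* Let $W=\mathrm{des}(\pi)$ and $W^\ast=\mathrm{des}(\pi^\ast)$, where $\pi^\ast$ is constructed from $\pi$ as described in the context. Then $W^\ast$ has the $W$-size biased distribution.
   Context: Let $h\ge 2$, let $n_1,\dots,n_h$ be positive integers, $n=n_1+\dots+n_h\ge 4$, and let $\pi$ be a uniformly distributed permutation of the multiset $\{1^{n_1},\dots,h^{n_h}\}$ (a sequence $(\pi(1),\dots,\pi(n))$ in which each $a$ occurs $n_a$ times, all such sequences equally likely). $\mathrm{des}(\pi)$ is the number of $i\in\{1,\dots,n-1\}$ with $\pi(i)>\pi(i+1)$. For a nonnegative integrable random variable $W$ with $\mathbb{E}W>0$, a random variable $W^\ast$ has the $W$-size biased distribution if $\mathbb{E}(Wf(W))=\mathbb{E}W\,\mathbb{E}f(W^\ast)$ for all continuous $f$ for which the left side exists. Construction of $\pi^\ast$: Let $I$ be uniformly distributed over $\{(1,2),(2,3),\dots,(n-1,n)\}$; let $J=(a,b)$, for $h\ge a>b\ge 1$, with probability $n_an_b/\sum_{c<d}n_cn_d$; $\pi,I,J$ are independent. Write $I=(i,j)$ with $j=i+1$. If $\pi(i)>\pi(j)$, set $\pi^\ast=\pi$. If $\pi(i)\le\pi(j)$ and $J=(a,b)$: choose $i^\ast$ uniformly from $\{k:\pi(k)=a\}$ and $j^\ast$ uniformly from $\{k:\pi(k)=b\}$, independently of each other and of all else. Then: (1) if $\{i,j\}\cap\{i^\ast,j^\ast\}=\emptyset$, or $i=i^\ast,j\ne j^\ast$, or $i\ne i^\ast,j=j^\ast$,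 obtain $\pi^\ast$ from $\pi$ by exchanging the entries at positions $i$ and $i^\ast$ and exchanging the entries at positions $j$ and $j^\ast$; (2) if $i=j^\ast$ and $j=i^\ast$, exchange the entries at positions $i$ and $j$; (3) if $i=j^\ast$, $j\ne i^\ast$, set $\pi^\ast(i)=\pi(i^\ast)$, $\pi^\ast(j)=\pi(i)$, $\pi^\ast(i^\ast)=\pi(j)$, and $\pi^\ast(k)=\pi(k)$ for $k\notin\{i,j,i^\ast\}$; (4) if $i\ne j^\ast$, $j=i^\ast$, set $\pi^\ast(i)=\pi(j)$, $\pi^\ast(j)=\pi(j^\ast)$, $\pi^\ast(j^\ast)=\pi(i)$, and $\pi^\ast(k)=\pi(k)$ for $k\notin\{i,j,j^\ast\}$. *)

(* Defs.v *)
From HB Require Import structures.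
From mathcomp Require Import all_boot all_order all_algebra.
From mathcomp Require Import all_classical all_reals all_analysis.
Set Implicit Arguments. Unset Strict Implicit. Unset Printing Implicit Defensive.
Import Order.TTheory GRing.Theory Num.Theory.
Import numFieldNormedType.Exports.

(* Conventions: positions 1..n are 'I_n (position k+1 <-> ordinal k);
   letters 1..h are 'I_h (letter a+1 <-> ordinal a), order-preserving.
   A word pi is a finite function 'I_n -> 'I_h. *)

Section Defs.
Variables (h n : nat).
Local Notation word := {ffun 'I_n -> 'I_h}.

Definition mperms (nn : 'I_h -> nat) : {set word} :=
  [set p : word | [forall a : 'I_h, #|[set k | p k == a]| == nn a]].

Definition des (p : word) : nat :=
  #|[set ij : 'I_n * 'I_n | (val ij.2 == (val ij.1).+1) && (p ij.2 < p ij.1)]|.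

Definition xch (p : word) (x y : 'I_n) : word :=
  [ffun k => if k == x then p y else if k == y then p x else p k].

Definition pistar (p : word) (i j istar jstar : 'I_n) : word :=
  if p j < p i then p
  else if [|| [&& i != istar, i != jstar, j != istar & j != jstar],
              (i == istar) && (j != jstar) | (i != istar) && (j == jstar)]
  then xch (xch p i istar) j jstar
  else if (i == jstar) && (j == istar) then xch p i j
  else if (i == jstar) && (j != istar) then
    [ffun k => if k == i then p istar else if k == j then p i
               else if k == istar then p j else p k]
  else if (i != jstar) && (j == istar) then
    [ffun k => if k == i then p j else if k == j then p jstar
               else if k == jstar then p i else p k]
  else p (* unreachable: i = istar, j = jstar is impossible since p istar > p jstar *).

(* normalising constant for J: sum_{c<d} n_c n_d *)
Definition Jnorm (nn : 'I_h -> nat) : nat :=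
  \sum_(c : 'I_h) \sum_(d : 'I_h | c < d) nn c * nn d.

(* outcome (pi, I=(i,j), J=(a,b), istar, jstar) *)
Definition outcome := (word * ('I_n * 'I_n) * ('I_h * 'I_h) * ('I_n * 'I_n))%type.

Definition out_supp (nn : 'I_h -> nat) (w : outcome) : bool :=
  let: (p, (i, j), (a, b), (ist, jst)) := w in
  [&& p \in mperms nn, val j == (val i).+1, b < a, p ist == a & p jst == b].

Variable R : realType.

(* weight = P(pi) P(I) P(J=(a,b)) P(istar) P(jstar) *)
Definition out_weight (nn : 'I_h -> nat) (w : outcome) : R :=
  let: (p, (i, j), (a, b), (ist, jst)) := w in
  (#|mperms nn|%:R)^-1 * ((n - 1)%:R)^-1 *
  ((nn a * nn b)%:R / (Jnorm nn)%:R) * (nn a)%:R^-1 * (nn b)%:R^-1.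

Definition Wstar (w : outcome) : nat :=
  let: (p, (i, j), (a, b), (ist, jst)) := w in des (pistar p i j ist jst).

Definition E_W (nn : 'I_h -> nat) (g : R -> R) : R :=
  (#|mperms nn|%:R)^-1 * \sum_(p in mperms nn) g (des p)%:R.

Definition E_Wstar (nn : 'I_h -> nat) (g : R -> R) : R :=
  \sum_(w : outcome | out_supp nn w) out_weight nn w * g (Wstar w)%:R.

End Defs.

(* Main.v *)
Require Import Defs.
From HB Require Import structures.
From mathcomp Require Import all_boot all_order all_algebra.
From mathcomp Require Import all_classical all_reals all_analysis.
From mathcomp Require Import perm zify ring.
Set Implicit Arguments. Unset Strict Implicit. Unset Printing Implicit Defensive.
Import Order.TTheory GRing.Theory Num.Theory.
Import numFieldNormedType.Exports.

Lemma xch_M h n (nn : 'I_h -> nat) (p : {ffun 'I_n -> 'I_h}) x y :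
  p \in mperms n nn -> xch p x y \in mperms n nn.
Proof.
rewrite !inE => /forallP H; apply/forallP => a.
have -> : [set k | xch p x y k == a] = (tperm x y) @^-1: [set k | p k == a].
  apply/setP => k; rewrite !inE ffunE; case: (tpermP x y k) => [->|->|/eqP H1 /eqP H2].
  - by rewrite eqxx.
  - by have [->|Hxy] := eqVneq y x; rewrite ?eqxx.
  - by rewrite (negbTE H1) (negbTE H2).
by rewrite card_preimset //; exact: perm_inj.
Qed.

Lemma xchE h n (p : {ffun 'I_n -> 'I_h}) x y k :
  xch p x y k = if k == x then p y else if k == y then p x else p k.
Proof. by rewrite ffunE. Qed.

Ltac brute1 :=
  (first
    [ by []
    | apply: xch_M
    | match goal with
      | |- is_true (_ && _) => apply/andP; split
      end
    | progress (unfold pistar; rewrite /= ?xchE ?ffunE ?eqxx /=)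
    | match goal with
      | H : is_true (?a != ?a) |- _ => by rewrite eqxx in H
      | H : is_true (?a < ?a) |- _ => by rewrite ltnn in H
      | H1 : is_true (?a < ?b), H2 : is_true (?b < ?a) |- _ =>
          by move: (ltn_trans H1 H2); rewrite ltnn
      | H1 : is_true (?a < ?b), H2 : is_true (~~ (?a < ?b)) |- _ =>
          by rewrite H1 in H2
      | H : is_true ?a |- is_true ?a => exact H
      | H : ?a = ?a |- _ => clear H
      | H : is_true (_ && _) |- _ => case/andP: H => ? ?
      | H : is_true (?a == ?b) |- _ => move/eqP: H => H; subst
      | H : is_true (?a != ?b) |- context [?a == ?b] => rewrite (negbTE H)
      | H : is_true (?a != ?b) |- context [?b == ?a] => rewrite [b == a]eq_sym (negbTE H)
      end
    | match goal with
      | |- (_, _) = (_, _) => congr pair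
      | |- @eq (finfun_of _) _ _ => apply/ffunP => ?
      end
    | match goal with |- context [?a == ?b] => is_var a; is_var b;
        case: (eqVneq a b) => [?|?]; try subst end
    | case: ifPn => ?
    | by exfalso; lia
    | by apply/eqP; lia
    ]).
Ltac brute := repeat brute1.

Definition Tt h n := ({ffun 'I_n -> 'I_h} * ('I_n * 'I_n) * ('I_n * 'I_n))%type.

Definition inT h n (nn : 'I_h -> nat) (t : Tt h n) : bool :=
  let: (q, (i, j), (x, y)) := t in
  [&& q \in mperms n nn, val j == (val i).+1, q j < q i & x != y].

Definition phi h n (t : Tt h n) : outcome h n :=
  let: (q, (i,j), (x,y)) := t in
  let: (p, ist, jst) :=
    if q y < q x then (q, x, y)
    else if (x == j) && (y == i) then (xch q i j, j, i)
    else if x == j then (xch (xch q i j) j y, y, i)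
    else if y == i then (xch (xch q i j) i x, j, x)
    else if x == i then (xch q j y, i, y)
    else if y == j then (xch q i x, x, j)
    else (xch (xch q j y) i x, x, y) in
  (p, (i,j), (p ist, p jst), (ist, jst)).

Definition psi h n (s : outcome h n) : Tt h n :=
  let: (p, (i,j), _, (ist,jst)) := s in
  (pistar p i j ist jst, (i,j),
   if p j < p i then (ist,jst)
   else if (i == jst) && (j != ist) then (j, ist)
   else if (j == ist) && (i != jst) then (jst, i)
   else (ist,jst)).

Lemma psi_phi h n nn (t : Tt h n) : inT nn t -> psi (phi t) = t.
Proof.
case: t => [[q [i j]] [x y]] /= /and4P [qM /eqP Hij qji xy].
have ij : i != j by apply/eqP => E; rewrite E in Hij; lia.
clear Hij.
brute.
Qed.

Lemma phi_S h n nn (t : Tt h n) : inT nn t -> out_supp nn (phi t).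
Proof.
case: t => [[q [i j]] [x y]] /= /and4P [qM /eqP Hij qji xy].
have ij : i != j by apply/eqP => E; rewrite E in Hij; lia.
brute.
Qed.


Lemma pistar_M h n nn (p : {ffun 'I_n -> 'I_h}) i j ist jst :
  p \in mperms n nn -> i != j -> ist != jst -> pistar p i j ist jst \in mperms n nn.
Proof.
move=> pM ij sd; rewrite /pistar.
case: ifP => _ //; case: ifP => _; first by do 2 apply: xch_M.
case: ifP => _; first by apply: xch_M.
case: ifP => [/andP [/eqP E jist]|_].
  subst jst.
  match goal with |- is_true (?F \in _) => have -> : F = xch (xch p i ist) j ist end.
    by apply/ffunP => k; brute.
  by do 2 apply: xch_M.
case: ifP => [/andP [iist /eqP E]|_] //.
subst ist.
match goal with |- is_true (?F \in _) => have -> : F = xch (xch p i j) j jst end.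
  by apply/ffunP => k; brute.
by do 2 apply: xch_M.
Qed.

Lemma psi_T h n nn (s : outcome h n) : out_supp nn s -> inT nn (psi s).
Proof.
case: s => [[[p [i j]] [a b]] [ist jst]] /= /and5P [pM /eqP Hij ba pa pb].
have ij : i != j by apply/eqP => E; rewrite E in Hij; lia.
have sd : ist != jst by apply/eqP => E; move: ba; rewrite -(eqP pa) -(eqP pb) E ltnn.
case: ifPn => H1; last case: ifPn => H2; last case: ifPn => H3.
all: rewrite /=; apply/and4P; split; first exact: pistar_M.
all: brute.
Qed.

Lemma phi_psi h n nn (s : outcome h n) : out_supp nn s -> phi (psi s) = s.
Proof.
case: s => [[[p [i j]] [a b]] [ist jst]] /= /and5P [pM /eqP Hij ba pa pb].
have ij : i != j by apply/eqP => E; rewrite E in Hij; lia.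
have sd : ist != jst by apply/eqP => E; move: ba; rewrite -(eqP pa) -(eqP pb) E ltnn.
clear Hij pM.
brute.
Qed.

Local Open Scope ring_scope.

Lemma Wstar_psi h n (s : outcome h n) : Wstar s = des (psi s).1.1.
Proof. by case: s => [[[p [i j]] [a b]] [ist jst]]. Qed.

Lemma key (R : realType) h n nn (G : nat -> R) :
  \sum_(w : outcome h n | out_supp nn w) G (Wstar w) =
  \sum_(t : Tt h n | inT nn t) G (des t.1.1).
Proof.
rewrite (reindex_onto (@phi h n) (@psi h n)) => [|s Hs]; last exact: (phi_psi Hs).
apply: eq_big => [t|t /andP [_ /eqP E]].
- apply/idP/idP => [/andP [Hs /eqP E]|Ht]; first by rewrite -E; apply: psi_T.
  by rewrite phi_S //= (psi_phi Ht) eqxx.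
- by rewrite Wstar_psi E.
Qed.

Lemma sumRc (R : realType) (I : finType) (P : pred I) (c : R) :
  \sum_(x | P x) c = c * (\sum_(x | P x) 1%N)%:R.
Proof. by rewrite natr_sum mulr_sumr; apply: eq_bigr => _ _; rewrite mulr1. Qed.

Lemma N1 n : (\sum_(xy : 'I_n * 'I_n | xy.1 != xy.2) 1 = n * n.-1)%N.
Proof.
transitivity (\sum_(p : 'I_n * 'I_n | xpredT p.1 && (p.1 != p.2)) 1)%N; first by apply: eq_bigl.
rewrite -(pair_big_dep xpredT (fun x y => x != y) (fun _ _ => 1%N)) /=.
transitivity (\sum_(x : 'I_n) n.-1)%N.
  apply: eq_bigr => x _; rewrite sum1dep_card -[in RHS](card_ord n) -(cardC1 x).
  by apply: eq_card => y; rewrite !inE eq_sym.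
by rewrite big_const_ord iter_addn_0 mulnC.
Qed.

Lemma sumT (R : realType) h n nn (G : {ffun 'I_n -> 'I_h} -> R) :
  \sum_(t : Tt h n | inT nn t) G t.1.1 =
  \sum_(q in mperms n nn) G q * (des q * (n * n.-1))%N%:R.
Proof.
symmetry.
transitivity (\sum_(q in mperms n nn)
   \sum_(ij : 'I_n * 'I_n | (val ij.2 == (val ij.1).+1) && (q ij.2 < q ij.1)%N)
   \sum_(xy : 'I_n * 'I_n | xy.1 != xy.2) G q).
  apply: eq_bigr => q _.
  under eq_bigr do rewrite sumRc N1.
  by rewrite sumRc sum1dep_card natrM mulrA mulrAC.
rewrite pair_big_dep pair_big_dep.
apply: eq_big => [[[q [i j]] [x y]]|[[q [i j]] [x y]] _] //=.
by rewrite !andbA.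
Qed.

Lemma adj_count n :
  (\sum_(ij : 'I_n * 'I_n | val ij.2 == (val ij.1).+1) 1 = n.-1)%N.
Proof.
transitivity (\sum_(ij : 'I_n * 'I_n | xpredT ij.1 && (val ij.2 == (val ij.1).+1)) 1)%N;
  first by apply: eq_bigl.
rewrite -(pair_big_dep xpredT (fun i (j : 'I_n) => val j == (val i).+1) (fun _ _ => 1%N)) /=.
have E m : (\sum_(j : 'I_n | val j == m) 1 = (m < n))%N.
  case: (ltnP m n) => Hm.
    by rewrite (big_pred1 (Ordinal Hm)).
  rewrite big_pred0 // => j; apply/negbTE; apply/eqP => E.
  by move: (ltn_ord j); rewrite E ltnNge Hm.
under eq_bigr do rewrite E; clear E.
rewrite -(big_mkord xpredT (fun i => (i.+1 < n : nat)%N)).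
case: n => [|m]; first by rewrite big_geq.
rewrite big_nat_recr //= ltnn addn0.
rewrite (eq_big_nat _ _ (F2 := fun _ => 1%N)) => [|i /andP [_ Hi]] //.
  by rewrite sum_nat_const_nat subn0 muln1.
by rewrite ltnS Hi.
Qed.

Lemma swap_inj (T : finType) : injective (fun x : T * T => (x.2, x.1)).
Proof. by move=> [a b] [c d] [-> ->]. Qed.

Lemma J_eq h (nn : 'I_h -> nat) :
  (\sum_(ab : 'I_h * 'I_h | ab.2 < ab.1) nn ab.1 * nn ab.2 = Jnorm nn)%N.
Proof.
rewrite /Jnorm pair_big_dep /= (reindex_inj (@swap_inj _)) /=.
by apply: eq_bigr => ab _; rewrite mulnC.
Qed.

Lemma st_count h n nn (p : {ffun 'I_n -> 'I_h}) a b : p \in mperms n nn ->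
  (\sum_(st : 'I_n * 'I_n | (p st.1 == a) && (p st.2 == b)) 1 = nn a * nn b)%N.
Proof.
rewrite inE => /forallP H.
transitivity (\sum_(st : 'I_n * 'I_n | (p st.1 == a) && (p st.2 == b)) 1)%N => //.
rewrite -(pair_big_dep (fun i => p i == a) (fun _ j => p j == b) (fun _ _ => 1%N)) /=.
under eq_bigr do rewrite sum1dep_card (eqP (H b)).
by rewrite sum_nat_cond_const (eqP (H a)).
Qed.

Lemma Zc h n nn :
  (\sum_(w : outcome h n | out_supp nn w) 1 = #|mperms n nn| * (n.-1 * Jnorm nn))%N.
Proof.
transitivity (\sum_(p in mperms n nn) \sum_(ij : 'I_n * 'I_n | val ij.2 == (val ij.1).+1)
   \sum_(ab : 'I_h * 'I_h | ab.2 < ab.1)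
   \sum_(st : 'I_n * 'I_n | (p st.1 == ab.1) && (p st.2 == ab.2)) 1)%N.
  rewrite !pair_big_dep.
  by apply: eq_big => [[[[p [i j]] [a b]] [ist jst]]|] //=; rewrite !andbA.
rewrite -sum_nat_const; apply: eq_bigr => p pM.
transitivity (\sum_(ij : 'I_n * 'I_n | val ij.2 == (val ij.1).+1) Jnorm nn)%N.
  apply: eq_bigr => ij _; rewrite -J_eq; apply: eq_bigr => ab _.
  exact: st_count.
by rewrite sum_nat_cond_const -sum1dep_card adj_count.
Qed.

Unset Implicit Arguments.

Theorem lemma2p14 (R : realType) (h n : nat) (nn : 'I_h -> nat) :
  (2 <= h)%N -> (forall a, 0 < nn a)%N -> n = (\sum_(a : 'I_h) nn a)%N -> (4 <= n)%N ->
  forall f : R -> R, continuous f ->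
  @E_W h n R nn (fun x => x * f x) = @E_W h n R nn id * @E_Wstar h n R nn f.
Proof.
move=> h2 npos nsum n4 f _.
set N := (n * n.-1)%N.
have Jpos : (0 < Jnorm nn)%N.
  have h0 : (0 < h)%N by lia.
  rewrite /Jnorm (bigD1 (Ordinal h0)) //= (bigD1 (Ordinal h2)) //=.
  have := npos (Ordinal h0); have := npos (Ordinal h2); nia.
have HS (G : nat -> R) : \sum_(w : outcome h n | out_supp nn w) G (Wstar w) =
    \sum_(q in mperms n nn) G (des q) * (des q * N)%N%:R.
  rewrite key; have := @sumT R h n nn (fun q => G (des q)); rewrite /= => -> //.
set A := \sum_(q in mperms n nn) (des q)%:R * f (des q)%:R.
set B := \sum_(q in mperms n nn) ((des q)%:R : R).
set m := (#|mperms n nn|%:R : R).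
have EWs : E_Wstar n nn f = m^-1 * ((n - 1)%:R)^-1 * ((Jnorm nn)%:R)^-1 * (N%:R * A).
  rewrite /E_Wstar.
  transitivity (\sum_(w : outcome h n | out_supp nn w)
     (m^-1 * ((n - 1)%:R)^-1 * ((Jnorm nn)%:R)^-1) * f (Wstar w)%:R).
    apply: eq_bigr => -[[[p [i j]] [a b]] [ist jst]] /= _.
    congr (_ * _); rewrite /out_weight natrM.
    have Ha : (nn a)%:R != 0 :> R by rewrite pnatr_eq0 -lt0n.
    have Hb : (nn b)%:R != 0 :> R by rewrite pnatr_eq0 -lt0n.
    have HJ : (Jnorm nn)%:R != 0 :> R by rewrite pnatr_eq0 -lt0n.
    rewrite -!mulrA; do 2 congr (_ * _).
    by field; rewrite HJ Ha Hb.
  rewrite -mulr_sumr (HS (fun k => f k%:R)) /=; congr (_ * _).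
  rewrite /A mulr_sumr; apply: eq_bigr => q _; rewrite natrM; ring.
have ZB : m * (n.-1 * Jnorm nn)%N%:R = N%:R * B.
  rewrite -natrM -Zc natr_sum.
  have := HS (fun _ => 1); rewrite /= => E.
  transitivity (\sum_(w : outcome h n | out_supp nn w) (1 : R)).
    by apply: eq_bigr => w _.
  rewrite E /B mulr_sumr; apply: eq_bigr => q _; rewrite natrM; ring.
rewrite /E_W EWs -/m -/A -/B.
have [m0|mn0] := eqVneq m 0.
  by rewrite m0 invr0 !mul0r.
transitivity (m^-1 * (m^-1 * ((n - 1)%:R)^-1 * ((Jnorm nn)%:R)^-1) * (N%:R * B) * A).
  rewrite -ZB subn1 natrM.
  have Hn : (n.-1)%:R != 0 :> R by rewrite pnatr_eq0; lia.
  have HJ : (Jnorm nn)%:R != 0 :> R by rewrite pnatr_eq0 -lt0n.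
  by field; rewrite HJ Hn mn0.
by ring.
Qed.
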